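(* For every integer $n\ge4$ there exists a real number $\alpha>0$ which is an infinite loop mod $n$.
   Context: For $\alpha$ with simple continued fraction $[a_0;a_1,\ldots]$, convergents $p_k/q_k$ are given by $p_{-1}=1,q_{-1}=0,p_0=a_0,q_0=1$, $p_k=a_kp_{k-1}+p_{k-2}$, $q_k=a_kq_{k-1}+q_{k-2}$, and semi-convergents are $(mp_k+p_{k-1})/(mq_k+q_{k-1})$ for $0\le m\le a_{k+1}$. A real $\alpha>0$ is an \emph{infinite loop mod $n$} if none of its semi-convergent denominators is divisible by $n$, except $q_{-1}=0$ (for rational $\alpha$, both finite expansions are considered and the expansion is regarded as ending with a partial quotient $\infty$, so all $m\ge0$ are allowed after the last convergent). *)

(* Defs.v *)
From Stdlib Require Import Reals Arith.
Open Scope R_scope.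

(* A candidate simple continued fraction expansion is encoded as
   a : nat -> option nat, where a k = Some a_k is the k-th partial quotient
   and a k = None means the expansion has ended (partial quotient "infinity").
   Since alpha > 0, a_0 >= 0, so natural numbers suffice. *)

(* cf_state a k = ((p_{k-1}, q_{k-1}), (p_k, q_k)) *)
Fixpoint cf_state (a : nat -> option nat) (k : nat) : (nat * nat) * (nat * nat) :=
  match k with
  | O => ((1%nat, 0%nat), (match a O with Some b => b | None => 0%nat end, 1%nat))
  | S k' =>
      let '((p', q'), (p, q)) := cf_state a k' in
      let b := match a (S k') with Some b => b | None => 0%nat end in
      ((p, q), (b * p + p', b * q + q')%nat)
  end.

Definition cf_p (a : nat -> option nat) (k : nat) : nat := fst (snd (cf_state a k)).
Definition cf_q (a : nat -> option nat) (k : nat) : nat := snd (snd (cf_state a k)).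
Definition cf_qprev (a : nat -> option nat) (k : nat) : nat := snd (fst (cf_state a k)).

Definition is_cf_expansion (x : R) (a : nat -> option nat) : Prop :=
  a O <> None /\
  (forall k, a k = None -> a (S k) = None) /\
  (forall k b, a (S k) = Some b -> (1 <= b)%nat) /\
  ((forall k, a k <> None) ->
     Un_cv (fun k => INR (cf_p a k) / INR (cf_q a k)) x) /\
  (forall N, a N <> None -> a (S N) = None ->
     x = INR (cf_p a N) / INR (cf_q a N)).

Definition semi_conv_den (a : nat -> option nat) (k m d : nat) : Prop :=
  a k <> None /\
  (match a (S k) with Some b => (m <= b)%nat | None => True end) /\
  d = (m * cf_q a k + cf_qprev a k)%nat.

(* alpha is an infinite loop mod n: for every expansion of alpha (both
   finite ones if alpha is rational), no semi-convergent denominator is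
   divisible by n, except q_{-1} = 0 (the index k = 0, m = 0). *)
Definition infinite_loop_mod (n : nat) (alpha : R) : Prop :=
  0 < alpha /\
  forall a, is_cf_expansion alpha a ->
  forall k m d, semi_conv_den a k m d -> ~ (k = O /\ m = O) ->
    ~ Nat.divide n d.

(* Main.v *)
Require Import Defs.
From Stdlib Require Import Reals Arith Lra Lia Psatz Classical ZArith.
Open Scope R_scope.

Definition cf_pp (a : nat -> option nat) (k : nat) : nat := fst (fst (cf_state a k)).
Definition dflt (o : option nat) : nat := match o with Some b => b | None => 0%nat end.

Lemma cf_step a k :
  cf_pp a (S k) = cf_p a k /\ cf_qprev a (S k) = cf_q a k /\
  cf_p a (S k) = (dflt (a (S k)) * cf_p a k + cf_pp a k)%nat /\
  cf_q a (S k) = (dflt (a (S k)) * cf_q a k + cf_qprev a k)%nat.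
Proof.
  unfold cf_pp, cf_p, cf_q, cf_qprev; simpl.
  destruct (cf_state a k) as [[x y] [z w]]; simpl. auto.
Qed.

Lemma cf_zero a : cf_pp a 0%nat = 1%nat /\ cf_qprev a 0%nat = 0%nat /\
  cf_p a 0%nat = dflt (a 0%nat) /\ cf_q a 0%nat = 1%nat.
Proof. unfold cf_pp, cf_p, cf_q, cf_qprev; simpl. auto. Qed.

Lemma cf_det a k :
  (cf_pp a k * cf_q a k = cf_p a k * cf_qprev a k + 1)%nat \/
  (cf_p a k * cf_qprev a k = cf_pp a k * cf_q a k + 1)%nat.
Proof.
  induction k.
  - destruct (cf_zero a) as (h1&h2&h3&h4). rewrite h1,h2,h3,h4. lia.
  - destruct (cf_step a k) as (h1&h2&h3&h4). rewrite h1,h2,h3,h4.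
    set (b := dflt (a (S k))). destruct IHk as [H|H]; [right|left]; nia.
Qed.

Definition uu a (y : R) k := y * INR (cf_q a k) - INR (cf_p a k).
Definition vv a (y : R) k := y * INR (cf_qprev a k) - INR (cf_pp a k).

Lemma uv_step a y k : vv a y (S k) = uu a y k /\
  uu a y (S k) = INR (dflt (a (S k))) * uu a y k + vv a y k.
Proof.
  unfold uu, vv. destruct (cf_step a k) as (h1&h2&h3&h4). rewrite h1,h2,h3,h4.
  rewrite !plus_INR, !mult_INR. split; ring.
Qed.

Lemma uv_zero a y : vv a y 0%nat = -1 /\ uu a y 0%nat = y - INR (dflt (a 0%nat)).
Proof.
  unfold uu, vv. destruct (cf_zero a) as (h1&h2&h3&h4). rewrite h1,h2,h3,h4.
  simpl. split; ring.
Qed.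

Lemma uv_det a y k : ~ (uu a y k = 0 /\ vv a y k = 0).
Proof.
  intros [H1 H2]. unfold uu, vv in *.
  destruct (cf_det a k) as [H|H]; apply (f_equal INR) in H;
  rewrite !plus_INR, !mult_INR in H; simpl in H; nra.
Qed.

Definition gg a y k := uu a y k * vv a y k <= 0 /\ uu a y k ^ 2 <= vv a y k ^ 2.

Lemma gg_down a y k b : a (S k) = Some b -> (1 <= b)%nat -> gg a y (S k) -> gg a y k.
Proof.
  intros Hb Hb1. unfold gg. destruct (uv_step a y k) as [h1 h2]. rewrite h1, h2, Hb. simpl.
  apply le_INR in Hb1. simpl in Hb1.
  set (u := uu a y k). set (v := vv a y k). clearbody u v. revert Hb1. generalize (INR b). intros t Hb1 [H1 H2].
  destruct (Rle_lt_dec 0 u).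
  - destruct (Req_dec u 0).
    + subst u. split; nra.
    + assert (t*u+v <= 0) by nra. assert (t*u+v >= -u) by (destruct (Rlt_or_le (t*u+v) (-u)); nra).
      assert (v <= -u) by nra. split; nra.
  - assert (t*u+v >= 0) by nra. assert (t*u+v <= -u) by (destruct (Rlt_or_le (-u) (t*u+v)); nra).
    assert (v >= -u) by nra. split; nra.
Qed.

Lemma q_bounds a k :
  (forall i, (1 <= i <= k)%nat -> (1 <= dflt (a i))%nat) ->
  (1 <= cf_q a k /\ cf_qprev a k <= cf_q a k /\ k <= cf_q a k /\
   (1 <= k -> 1 <= cf_qprev a k))%nat.
Proof.
  induction k; intros H.
  - destruct (cf_zero a) as (h1&h2&h3&h4). rewrite h2, h4. lia.
  - destruct (cf_step a k) as (h1&h2&h3&h4). rewrite h2, h4.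
    assert (Hb : (1 <= dflt (a (S k)))%nat) by (apply H; lia).
    destruct IHk as (i1&i2&i3&i4). { intros i Hi. apply H. lia. }
    set (b := dflt (a (S k))) in *.
    destruct k; nia.
Qed.

Definition conv a j := INR (cf_p a j) / INR (cf_q a j).

Lemma uu_conv a j : (1 <= cf_q a j)%nat -> uu a (conv a j) j = 0.
Proof.
  intros H. apply le_INR in H. simpl in H. unfold uu, conv. field. lra.
Qed.

Lemma gg_self a j : (1 <= cf_q a j)%nat -> gg a (conv a j) j.
Proof.
  intros H. unfold gg. rewrite uu_conv by auto. split; nra.
Qed.

Lemma gg_later a y k j :
  (forall i, (1 <= i)%nat -> (i <= j)%nat -> (1 <= dflt (a i))%nat) ->
  (forall i b, a (S i) = Some b -> (1 <= b)%nat) ->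
  (forall i, (i <= j)%nat -> a i <> None) ->
  (k <= j)%nat -> gg a y j -> gg a y k.
Proof.
  intros H1 H2 H3 Hkj. induction Hkj; auto.
  intros G. apply IHHkj.
  - intros i Hi Hi'. apply H1; lia.
  - intros i Hi. apply H3; lia.
  - destruct (a (S m)) eqn:E.
    + eapply gg_down; eauto.
    + exfalso. apply (H3 (S m)); auto.
Qed.

Lemma cv_le0 f l k : Un_cv f l -> (forall j, (k <= j)%nat -> f j <= 0) -> l <= 0.
Proof.
  intros Hc Hf. destruct (Rle_lt_dec l 0) as [|Hl]; auto.
  destruct (Hc l Hl) as [N HN]. specialize (HN (max N k) ltac:(lia)).
  specialize (Hf (max N k) ltac:(lia)). unfold Rdist in HN.
  rewrite Rabs_left1 in HN; lra.
Qed.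

Lemma cv_const c : Un_cv (fun _ => c) c.
Proof. intros e He. exists 0%nat. intros. unfold Rdist. rewrite Rminus_diag, Rabs_R0. lra. Qed.

Lemma cv_aff f l A B : Un_cv f l -> Un_cv (fun j => f j * A - B) (l * A - B).
Proof.
  intros H. apply CV_minus; [apply CV_mult|]; auto using cv_const.
Qed.

Lemma exp_prefix x a : is_cf_expansion x a -> forall k, a k <> None -> forall i, (i <= k)%nat -> a i <> None.
Proof.
  intros (h0&h1&h2&h3&h4) k Hk i Hi. induction Hi; auto.
Qed.

Lemma exp_pos x a : is_cf_expansion x a -> forall i, (1 <= i)%nat -> a i <> None -> (1 <= dflt (a i))%nat.
Proof.
  intros (h0&h1&h2&h3&h4) i Hi Ha. destruct i; [lia|].
  destruct (a (S i)) eqn:E; [|congruence]. simpl. eapply h2; eauto.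
Qed.

Lemma exp_q x a : is_cf_expansion x a -> forall k, a k <> None -> (1 <= cf_q a k)%nat.
Proof.
  intros He k Hk. apply q_bounds. intros i Hi. apply (exp_pos x a He); [lia|].
  eapply exp_prefix; eauto. lia.
Qed.

Lemma exp_gg x a : is_cf_expansion x a -> forall k, a k <> None -> gg a x k.
Proof.
  intros He k Hk. pose proof He as (h0&h1&h2&h3&h4).
  assert (Hl : forall j, (k <= j)%nat -> a j <> None -> gg a (conv a j) k).
  { intros j Hj Haj. apply gg_later with j; auto.
    - intros i Hi Hi'. apply (exp_pos x a He); auto. eapply exp_prefix; eauto.
    - intros i. eapply exp_prefix; eauto.
    - apply gg_self. eapply exp_q; eauto. }
  destruct (classic (forall j, a j <> None)) as [Hall|Hn].
  - specialize (h3 Hall).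
    assert (Hu := cv_aff _ _ (INR (cf_q a k)) (INR (cf_p a k)) h3).
    assert (Hv := cv_aff _ _ (INR (cf_qprev a k)) (INR (cf_pp a k)) h3).
    unfold gg. split.
    + apply (cv_le0 _ _ k (CV_mult _ _ _ _ Hu Hv)).
      intros j Hj. apply (Hl j Hj (Hall j)).
    + assert (Hs := CV_minus _ _ _ _ (CV_mult _ _ _ _ Hu Hu) (CV_mult _ _ _ _ Hv Hv)).
      cut (uu a x k * uu a x k - vv a x k * vv a x k <= 0). { intros; nra. }
      apply (cv_le0 _ _ k Hs). intros j Hj. destruct (Hl j Hj (Hall j)) as [_ G].
      unfold uu, vv in G. fold (conv a j) in G. cbv beta. fold (conv a j). nra.
  - apply not_all_ex_not in Hn. destruct Hn as [j Hj]. apply NNPP in Hj.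
    assert (HN : exists N, a N <> None /\ a (S N) = None).
    { clear - Hj h0. induction j. { congruence. }
      destruct (a j) eqn:E. { exists j. split; congruence. } auto. }
    destruct HN as [N [HN1 HN2]].
    assert (HkN : (k <= N)%nat).
    { destruct (le_lt_dec k N); auto. exfalso. apply Hk.
      clear - l HN2 h1. induction l; auto. }
    rewrite (h4 N HN1 HN2). apply Hl; auto.
Qed.

Lemma exp_last x a k : is_cf_expansion x a -> a k <> None -> a (S k) = None -> uu a x k = 0.
Proof.
  intros He Hk HS. pose proof He as (h0&h1&h2&h3&h4). rewrite (h4 k Hk HS).
  fold (conv a k). apply uu_conv. eapply exp_q; eauto.
Qed.

Lemma exp_nz x a k s : is_cf_expansion x a -> a (S k) = Some s -> uu a x k <> 0.
Proof.
  intros He Hs Hu. assert (G := exp_gg x a He (S k) ltac:(congruence)).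
  destruct G as [_ G]. destruct (uv_step a x k) as [e1 e2]. rewrite e1, e2, Hu in G.
  apply (uv_det a x k). split; auto. nra.
Qed.

Lemma exp_strict x a k s t : is_cf_expansion x a -> a (S k) = Some s -> a (S (S k)) = Some t ->
  uu a x k * vv a x k < 0 /\ uu a x k ^ 2 < vv a x k ^ 2.
Proof.
  intros He Hs Ht.
  assert (G0 := exp_gg x a He k (exp_prefix x a He (S k) ltac:(congruence) k ltac:(lia))).
  assert (G1 := exp_gg x a He (S k) ltac:(congruence)).
  assert (N0 := exp_nz x a k s He Hs).
  assert (N1 := exp_nz x a (S k) t He Ht).
  assert (Hs1 : (1 <= s)%nat) by (destruct He as (_&_&h2&_); eauto).
  apply le_INR in Hs1. simpl in Hs1.
  destruct G0 as [G0a G0b]. destruct G1 as [G1a G1b].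
  destruct (uv_step a x k) as [e1 e2]. rewrite e1, e2, Hs in *. simpl dflt in *.
  revert G0a G0b G1a G1b N0 N1 Hs1. generalize (uu a x k) (vv a x k) (INR s).
  clear t Ht. intros u v t G0a G0b G1a G1b N0 N1 Hs1.
  assert (Hv : v <> 0) by (intro; subst; apply N0; nra).
  assert (Huv : u * v < 0).
  { destruct (Rle_lt_dec 0 (u*v)); auto. exfalso. assert (u * v = 0) by lra.
    apply Rmult_integral in H. tauto. }
  split; auto.
  destruct (Rle_lt_dec (v^2) (u^2)); [|auto]. exfalso.
  assert (E : (v - (-u)) * (v + u) = 0) by nra.
  apply Rmult_integral in E. destruct E as [E|E].
  - assert (v = -u) by lra. subst v. nra.
  - assert (v = -u) by lra. subst v.
    apply N1. assert ((t-1)*u*u <= 0) by nra.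
    assert (t <= 1) by (destruct (Rle_lt_dec t 1); auto; nra).
    assert (t = 1) by lra. subst t. ring.
Qed.

Lemma cmp_real (U V : R) (ta tb : nat) :
  (INR ta * U + V) * U < 0 -> (INR ta * U + V) ^ 2 < U ^ 2 ->
  (INR tb * U + V) * U <= 0 -> (INR tb * U + V) ^ 2 <= U ^ 2 -> ta = tb.
Proof.
  intros H1 H2 H3 H4.
  assert (D : INR ta - INR tb < 1 /\ INR tb - INR ta < 1).
  { revert H1 H2 H3 H4. generalize (INR ta) (INR tb). intros A B H1 H2 H3 H4.
  assert (HU : U <> 0) by (intro; subst; nra).
  assert (HU2 : 0 < U * U) by nra.
  assert (Ha : -(U*U) < (A*U+V)*U) by (destruct (Rle_lt_dec ((A*U+V)*U) (-(U*U))); auto; nra).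
  assert (Hb : -(U*U) <= (B*U+V)*U) by (destruct (Rle_lt_dec (-(U*U)) ((B*U+V)*U)); auto; nra).
  split.
  - destruct (Rle_lt_dec 1 (A-B)); auto. nra.
  - destruct (Rle_lt_dec 1 (B-A)); auto. nra. }
  destruct D as [D1 D2].
  assert (ta < tb + 1)%nat by (apply INR_lt; rewrite plus_INR; simpl; lra).
  assert (tb < ta + 1)%nat by (apply INR_lt; rewrite plus_INR; simpl; lra).
  lia.
Qed.

Lemma state_eq a b k : (forall i, (i <= k)%nat -> a i = b i) -> cf_state a k = cf_state b k.
Proof.
  induction k; intros H.
  - simpl. rewrite (H 0%nat) by lia. auto.
  - simpl. rewrite IHk by (intros; apply H; lia). rewrite (H (S k)) by lia. auto.
Qed.

Lemma uniq_exp x a b : is_cf_expansion x a -> (forall j, a j <> None) ->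
  is_cf_expansion x b -> forall k, b k = a k.
Proof.
  intros Ha Hall Hb.
  assert (forall k i, (i <= k)%nat -> b i = a i).
  2:{ intros k. apply (H k). lia. }
  induction k.
  - intros i Hi. assert (i = 0%nat) by lia. subst i.
    destruct (a 0%nat) as [ta|] eqn:Ea; [|exfalso; exact (Hall 0%nat Ea)].
    destruct (b 0%nat) as [tb|] eqn:Eb; [|exfalso; destruct Hb as [h0 _]; auto].
    destruct (a 1%nat) as [s|] eqn:E1; [|exfalso; exact (Hall 1%nat E1)].
    destruct (a 2%nat) as [t|] eqn:E2; [|exfalso; exact (Hall 2%nat E2)].
    destruct (exp_strict x a 0 s t Ha E1 E2) as [S1 S2].
    destruct (exp_gg x b Hb 0 ltac:(congruence)) as [G1 G2].
    destruct (uv_zero a x) as [za1 za2]. destruct (uv_zero b x) as [zb1 zb2].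
    rewrite za1, za2, Ea in *. rewrite zb1, zb2, Eb in *. simpl dflt in *.
    f_equal. symmetry. apply (cmp_real (-1) x ta tb).
    + replace (INR ta * -1 + x) with (x - INR ta) by ring. nra.
    + replace (INR ta * -1 + x) with (x - INR ta) by ring. nra.
    + replace (INR tb * -1 + x) with (x - INR tb) by ring. nra.
    + replace (INR tb * -1 + x) with (x - INR tb) by ring. nra.
  - intros i Hi. destruct (Nat.eq_dec i (S k)); [|apply IHk; lia]. subst i.
    assert (Hst : cf_state b k = cf_state a k) by (apply state_eq; auto).
    assert (Eu : uu b x k = uu a x k) by (unfold uu, cf_q, cf_p; rewrite Hst; auto).
    assert (Ev : vv b x k = vv a x k) by (unfold vv, cf_qprev, cf_pp; rewrite Hst; auto).
    destruct (a (S k)) as [ta|] eqn:Ea; [|exfalso; exact (Hall _ Ea)].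
    destruct (a (S (S k))) as [s|] eqn:E1; [|exfalso; exact (Hall _ E1)].
    destruct (a (S (S (S k)))) as [t|] eqn:E2; [|exfalso; exact (Hall _ E2)].
    destruct (b (S k)) as [tb|] eqn:Eb.
    + destruct (exp_strict x a (S k) s t Ha E1 E2) as [S1 S2].
      destruct (exp_gg x b Hb (S k) ltac:(congruence)) as [G1 G2].
      destruct (uv_step a x k) as [sa1 sa2]. destruct (uv_step b x k) as [sb1 sb2].
      rewrite sa1, sa2, Ea in *. rewrite sb1, sb2, Eb, Eu, Ev in *. simpl dflt in *.
      f_equal. symmetry. apply (cmp_real (uu a x k) (vv a x k) ta tb); auto.
    + exfalso. assert (Hbk : b k <> None) by (rewrite IHk by lia; auto).
      assert (Z := exp_last x b k Hb Hbk Eb). rewrite Eu in Z.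
      exact (exp_nz x a k ta Ha Ea Z).
Qed.

Lemma gg_bound a y k : (1 <= cf_q a k)%nat -> gg a y k -> Rabs (y - conv a k) <= 1 / INR (cf_q a k).
Proof.
  intros Hq [G1 G2]. apply le_INR in Hq. simpl in Hq.
  assert (Hqp := pos_INR (cf_qprev a k)).
  assert (D : (vv a y k * INR (cf_q a k) - uu a y k * INR (cf_qprev a k))^2 = 1).
  { unfold uu, vv. destruct (cf_det a k) as [H|H]; apply (f_equal INR) in H;
    rewrite !plus_INR, !mult_INR in H; simpl in H; nra. }
  assert (E : y - conv a k = uu a y k / INR (cf_q a k)) by (unfold uu, conv; field; lra).
  rewrite E. revert G1 G2 D Hq Hqp. generalize (uu a y k) (vv a y k) (INR (cf_q a k)) (INR (cf_qprev a k)).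
  intros u v Q Qp G1 G2 D Hq' Hqp'.
  assert (u^2 * Q^2 <= 1).
  { assert (v^2*Q^2 - 2*(u*v)*(Q*Qp) + u^2*Qp^2 = 1) by nra.
    assert (0 <= Q*Qp) by nra. assert (0 <= u^2*Qp^2) by nra.
    assert (u^2*Q^2 <= v^2*Q^2) by nra. nra. }
  assert (Hu : Rabs u <= 1).
  { assert (u^2 <= u^2*Q^2) by (assert (1 <= Q^2) by nra; nra). apply Rabs_le. split; nra. }
  unfold Rdiv. rewrite Rabs_mult, Rabs_inv, (Rabs_right Q) by lra.
  apply Rmult_le_compat_r; [|lra]. left. apply Rinv_0_lt_compat. lra.
Qed.

Lemma inf_cauchy a : (forall j, a j <> None) -> (forall j b, a (S j) = Some b -> (1 <= b)%nat) ->
  Cauchy_crit (conv a).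
Proof.
  intros Hall Hpos.
  assert (Hd : forall i, (1 <= i)%nat -> (1 <= dflt (a i))%nat).
  { intros [|i] Hi; [lia|]. destruct (a (S i)) eqn:E; [|exfalso; exact (Hall _ E)]. eauto. }
  assert (Hq : forall k, (1 <= cf_q a k /\ k <= cf_q a k)%nat).
  { intros k. destruct (q_bounds a k (fun i Hi => Hd i (proj1 Hi))) as (x1&_&x3&_); auto. }
  assert (Hb : forall k j, (k <= j)%nat -> Rabs (conv a j - conv a k) <= 1 / INR (cf_q a k)).
  { intros k j Hkj. apply gg_bound; [apply Hq|]. apply gg_later with j; auto.
    apply gg_self. apply Hq. }
  intros eps He. destruct (INR_archimed eps 2 He) as [n Hn].
  exists (S n). intros i j Hi Hj. unfold Rdist.
  assert (H1 := Hb (S n) i Hi). assert (H2 := Hb (S n) j Hj).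
  destruct (Hq (S n)) as [_ Hq2]. apply le_INR in Hq2.
  assert (HnS : INR (S n) = INR n + 1) by (rewrite S_INR; auto).
  assert (Hn0 := pos_INR n).
  assert (1 / INR (cf_q a (S n)) <= 1 / INR (S n)).
  { apply Rmult_le_compat_l; [lra|]. apply Rinv_le_contravar; lra. }
  assert (2 / INR (S n) < eps).
  { rewrite HnS. apply (Rmult_lt_reg_r (INR n + 1)); [lra|].
    unfold Rdiv. rewrite Rmult_assoc, Rinv_l by lra. nra. }
  replace (conv a i - conv a j) with ((conv a i - conv a (S n)) - (conv a j - conv a (S n))) by ring.
  eapply Rle_lt_trans; [apply Rabs_triang|]. rewrite Rabs_Ropp. lra.
Qed.

Lemma none_after (b : nat -> option nat) k : (forall j, b j = None -> b (S j) = None) -> b k = None -> forall i, (k <= i)%nat -> b i = None.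
Proof. intros H Hk i Hi. induction Hi; auto. Qed.

Lemma four_case (b : nat -> option nat) : is_cf_expansion (3/2) b ->
  (b 0%nat = Some 1%nat /\ b 1%nat = Some 2%nat /\ forall i, (2 <= i)%nat -> b i = None) \/
  (b 0%nat = Some 1%nat /\ b 1%nat = Some 1%nat /\ b 2%nat = Some 1%nat /\ forall i, (3 <= i)%nat -> b i = None).
Proof.
  intros Hb. pose proof Hb as (h0&h1&h2&h3&h4).
  destruct (b 0%nat) as [t0|] eqn:E0; [|congruence].
  assert (G0 := exp_gg _ _ Hb 0 ltac:(congruence)).
  destruct (uv_zero b (3/2)) as [z1 z2]. unfold gg in G0. rewrite z1, z2, E0 in G0. simpl dflt in G0.
  assert (t0 = 1%nat).
  { destruct G0 as [G1 G2]. assert (INR t0 <= 3/2) by nra. assert (1/2 <= INR t0) by nra.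
    assert (t0 < 2)%nat by (apply INR_lt; simpl; lra).
    assert (0 < t0)%nat by (apply INR_lt; simpl; lra). lia. }
  subst t0.
  assert (U0 : uu b (3/2) 0 = 1/2) by (rewrite z2, E0; simpl; lra).
  destruct (b 1%nat) as [t1|] eqn:E1.
  2:{ exfalso. assert (Z := exp_last _ _ 0 Hb ltac:(congruence) E1). lra. }
  assert (G1 := exp_gg _ _ Hb 1 ltac:(congruence)). unfold gg in G1.
  destruct (uv_step b (3/2) 0) as [s1 s2]. rewrite s1, s2, E1, U0, z1 in G1. simpl dflt in G1.
  assert (t1 <= 2)%nat.
  { destruct G1 as [G G']. apply INR_le. simpl. nra. }
  assert (1 <= t1)%nat by eauto.
  assert (U1 : uu b (3/2) 1 = INR t1 * (1/2) - 1) by (rewrite s2, E1, U0, z1; simpl; lra).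
  assert (V1 : vv b (3/2) 1 = 1/2) by (rewrite s1; auto).
  destruct (Nat.eq_dec t1 2) as [->|Hne].
  - left. repeat split; auto. apply none_after; auto.
    destruct (b 2%nat) as [s|] eqn:E2; auto. exfalso.
    apply (exp_nz _ _ 1 s Hb E2). rewrite U1. simpl. lra.
  - assert (t1 = 1%nat) by lia. subst t1. right.
    rewrite U1 in *. simpl INR in *.
    destruct (b 2%nat) as [t2|] eqn:E2.
    2:{ exfalso. assert (Z := exp_last _ _ 1 Hb ltac:(congruence) E2). lra. }
    assert (G2 := exp_gg _ _ Hb 2 ltac:(congruence)). unfold gg in G2.
    destruct (uv_step b (3/2) 1) as [r1 r2]. rewrite r1, r2, E2, U1, V1 in G2. simpl dflt in G2.
    simpl INR in G2.
    assert (t2 <= 2)%nat.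
    { destruct G2 as [G G']. apply INR_le. simpl. nra. }
    assert (1 <= t2)%nat by eauto.
    assert (U2 : uu b (3/2) 2 = INR t2 * (-1/2) + 1/2) by (rewrite r2, E2, U1, V1; simpl; lra).
    destruct (Nat.eq_dec t2 2) as [->|Hne2].
    + exfalso. destruct (b 3%nat) as [t3|] eqn:E3.
      * assert (G3 := exp_gg _ _ Hb 3 ltac:(congruence)). unfold gg in G3.
        destruct (uv_step b (3/2) 2) as [w1 w2]. rewrite w1, w2, E3, U2, r1, U1 in G3.
        simpl dflt in G3. simpl INR in G3. destruct G3 as [G G'].
        assert (Ht3 := pos_INR t3). nra.
      * assert (Z := exp_last _ _ 2 Hb ltac:(congruence) E3). rewrite U2 in Z. simpl in Z. lra.
    + assert (t2 = 1%nat) by lia. subst t2. repeat split; auto.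
      apply none_after; auto.
      destruct (b 3%nat) as [s|] eqn:E3; auto. exfalso.
      apply (exp_nz _ _ 2 s Hb E3). rewrite U2. simpl. lra.
Qed.

Lemma four_ok : infinite_loop_mod 4 (3/2).
Proof.
  split; [lra|]. intros b Hb k m d [Hk [Hm Hd]] Hnot [z Hz].
  destruct (cf_zero b) as (a1&a2&a3&a4).
  destruct (cf_step b 0) as (b1&b2&b3&b4).
  destruct (cf_step b 1) as (c1&c2&c3&c4).
  destruct (four_case b Hb) as [(E0&E1&EN)|(E0&E1&E2&EN)].
  - destruct k as [|[|k]].
    + rewrite E1 in Hm. rewrite a2, a4 in Hd. lia.
    + rewrite b2, b4, E1, a2, a4 in Hd. simpl in Hd. lia.
    + exfalso. apply Hk. apply EN. lia.
  - destruct k as [|[|[|k]]].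
    + rewrite E1 in Hm. rewrite a2, a4 in Hd. lia.
    + rewrite E2 in Hm. rewrite b2, b4, E1, a2, a4 in Hd. simpl in Hd. lia.
    + rewrite c2, c4, b2, b4, E1, E2, a2, a4 in Hd. simpl in Hd. lia.
    + exfalso. apply Hk. apply EN. lia.
Qed.

Definition aseq (n : nat) (k : nat) : option nat :=
  match k with
  | O => Some 1%nat
  | S O => Some (n - 2)%nat
  | S (S j) => if Nat.even j then Some 1%nat else Some (n - 4)%nat
  end.

Lemma aseq_at n j r : aseq n (S (S (4*j + r))) = if Nat.even r then Some 1%nat else Some (n-4)%nat.
Proof.
  change (aseq n (S (S (4*j + r)))) with (if Nat.even (4*j+r) then Some 1%nat else Some (n-4)%nat).
  rewrite Nat.even_add. replace (4*j)%nat with (2*(2*j))%nat by lia.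
  rewrite Nat.even_even. destruct (Nat.even r); auto.
Qed.

Lemma aseq_some n k : aseq n k <> None.
Proof. destruct k as [|[|k]]; simpl; try destruct (Nat.even k); discriminate. Qed.

Lemma aseq_pos n : (5 <= n)%nat -> forall j b, aseq n (S j) = Some b -> (1 <= b)%nat.
Proof.
  intros Hn j b H. destruct j as [|j]; simpl in H.
  - inversion H; lia.
  - destruct (Nat.even j); inversion H; lia.
Qed.

Open Scope Z_scope.
Definition cong (n : Z) (z : nat) (r : Z) := exists s, Z.of_nat z = n * s + r.

Lemma cong_shift n z r : cong n z r -> cong n z (r + n) /\ cong n z (r - n).
Proof. intros [s Hs]. split; [exists (s-1)|exists (s+1)]; lia. Qed.

Lemma cong_step n a k x y b : cong n (cf_qprev a k) x -> cong n (cf_q a k) y ->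
  a (S k) = Some b ->
  cong n (cf_qprev a (S k)) y /\ cong n (cf_q a (S k)) (Z.of_nat b * y + x).
Proof.
  intros [s Hs] [s' Hs'] Hb. destruct (cf_step a k) as (_&h2&_&h4).
  rewrite h2, h4, Hb. simpl. split.
  - exists s'. auto.
  - exists (Z.of_nat b * s' + s). rewrite Nat2Z.inj_add, Nat2Z.inj_mul, Hs, Hs'. ring.
Qed.

Lemma cong_nodiv n a k x y m : (0 < n) -> cong n (cf_qprev a k) x -> cong n (cf_q a k) y ->
  (0 < Z.of_nat m * y + x < n \/ - n < Z.of_nat m * y + x < 0) ->
  ~ Nat.divide (Z.to_nat n) (m * cf_q a k + cf_qprev a k)%nat.
Proof.
  intros Hn [s Hs] [s' Hs'] Hr [z Hz].
  apply (f_equal Z.of_nat) in Hz. rewrite Nat2Z.inj_add, Nat2Z.inj_mul, Nat2Z.inj_mul, Hs, Hs', Z2Nat.id in Hz by lia.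
  assert (E : Z.of_nat m * y + x = n * (Z.of_nat z - Z.of_nat m * s' - s)) by lia.
  revert Hr. rewrite E. generalize (Z.of_nat z - Z.of_nat m * s' - s). intros w Hr. destruct Hr as [[H1 H2]|[H1 H2]]; [assert (0 < w) by nia | assert (w < 0) by nia]; nia.
Qed.
Close Scope Z_scope.

Open Scope Z_scope.
Lemma cong_adj n z r r' c : cong n z r -> r = r' + n*c -> cong n z r'.
Proof. intros [s Hs] E. exists (s + c). lia. Qed.

Section Res.
Variable n : nat.
Hypothesis Hn : (5 <= n)%nat.
Let N := Z.of_nat n.
Let a := aseq n.

Lemma a_r0 j : a (S (4*j+1)) = Some 1%nat.
Proof. replace (S (4*j+1)) with (S (S (4*j+0))) by lia. unfold a. rewrite aseq_at. auto. Qed.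
Lemma a_r1 j : a (S (S (4*j+1))) = Some (n-4)%nat.
Proof. replace (S (S (4*j+1))) with (S (S (4*j+1))) by lia. unfold a. rewrite aseq_at. auto. Qed.
Lemma a_r2 j : a (S (S (S (4*j+1)))) = Some 1%nat.
Proof. replace (S (S (S (4*j+1)))) with (S (S (4*j+2))) by lia. unfold a. rewrite aseq_at. auto. Qed.
Lemma a_r3 j : a (S (S (S (S (4*j+1))))) = Some (n-4)%nat.
Proof. replace (S (S (S (S (4*j+1))))) with (S (S (4*j+3))) by lia. unfold a. rewrite aseq_at. auto. Qed.

Lemma st_chain j : cong N (cf_qprev a (4*j+1)) 1 -> cong N (cf_q a (4*j+1)) (-2) ->
  (cong N (cf_qprev a (S (4*j+1))) (-2) /\ cong N (cf_q a (S (4*j+1))) (-1)) /\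
  (cong N (cf_qprev a (S (S (4*j+1)))) (-1) /\ cong N (cf_q a (S (S (4*j+1)))) 2) /\
  (cong N (cf_qprev a (S (S (S (4*j+1))))) 2 /\ cong N (cf_q a (S (S (S (4*j+1))))) 1) /\
  (cong N (cf_qprev a (4*(S j)+1)) 1 /\ cong N (cf_q a (4*(S j)+1)) (-2)).
Proof.
  intros H1 H2.
  destruct (cong_step N a _ _ _ _ H1 H2 (a_r0 j)) as [K1 K2].
  apply (cong_adj _ _ _ (-1) 0) in K2; [|unfold N; lia].
  destruct (cong_step N a _ _ _ _ K1 K2 (a_r1 j)) as [L1 L2].
  apply (cong_adj _ _ _ 2 (-1)) in L2; [|unfold N; lia].
  destruct (cong_step N a _ _ _ _ L1 L2 (a_r2 j)) as [M1 M2].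
  apply (cong_adj _ _ _ 1 0) in M2; [|unfold N; lia].
  destruct (cong_step N a _ _ _ _ M1 M2 (a_r3 j)) as [P1 P2].
  apply (cong_adj _ _ _ (-2) 1) in P2; [|unfold N; lia].
  replace (4 * S j + 1)%nat with (S (S (S (S (4*j+1))))) by lia.
  auto 10.
Qed.

Lemma st_inv j : cong N (cf_qprev a (4*j+1)) 1 /\ cong N (cf_q a (4*j+1)) (-2).
Proof.
  induction j.
  - destruct (cf_zero a) as (_&h2&_&h4).
    assert (C1 : cong N (cf_qprev a 0) 0) by (exists 0; rewrite h2; lia).
    assert (C2 : cong N (cf_q a 0) 1) by (exists 0; rewrite h4; lia).
    destruct (cong_step N a 0 0 1 (n-2) C1 C2 eq_refl) as [K1 K2].
    split; [exact K1|]. eapply cong_adj; [exact K2|]. instantiate (1 := 1). unfold N. lia.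
  - destruct IHj. apply st_chain; auto.
Qed.
End Res.
Close Scope Z_scope.

Lemma five_ok n : (5 <= n)%nat -> exists x, 0 < x /\ infinite_loop_mod n x.
Proof.
  intros Hn.
  destruct (R_complete (conv (aseq n)) (inf_cauchy _ (aseq_some n) (aseq_pos n Hn))) as [x Hx].
  assert (He : is_cf_expansion x (aseq n)).
  { repeat split.
    - apply aseq_some.
    - intros k E. exfalso. exact (aseq_some n k E).
    - apply (aseq_pos n Hn).
    - intros _. exact Hx.
    - intros N _ E. exfalso. exact (aseq_some n (S N) E). }
  assert (Hpos : 0 < x).
  { destruct (exp_gg x _ He 0 (aseq_some n 0)) as [G _].
    destruct (uv_zero (aseq n) x) as [z1 z2]. rewrite z1, z2 in G. simpl in G. lra. }
  exists x. split; auto. split; auto.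
  intros b Hb k m d [Hk [Hm Hd]] Hnot Hdiv.
  assert (Heq := uniq_exp x _ b He (aseq_some n) Hb).
  assert (Hst : cf_state b k = cf_state (aseq n) k) by (apply state_eq; auto).
  assert (Eq : cf_q b k = cf_q (aseq n) k) by (unfold cf_q; rewrite Hst; auto).
  assert (Eqp : cf_qprev b k = cf_qprev (aseq n) k) by (unfold cf_qprev; rewrite Hst; auto).
  rewrite Heq in Hm. rewrite Eq, Eqp in Hd. subst d.
  assert (Hdiv' : Nat.divide (Z.to_nat (Z.of_nat n)) (m * cf_q (aseq n) k + cf_qprev (aseq n) k))
    by (rewrite Nat2Z.id; exact Hdiv). clear Hdiv.
  assert (HN : (0 < Z.of_nat n)%Z) by lia.
  destruct k as [|k'].
  - destruct (cf_zero (aseq n)) as (_&h2&_&h4).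
    assert (C1 : cong (Z.of_nat n) (cf_qprev (aseq n) 0) 0) by (exists 0%Z; rewrite h2; lia).
    assert (C2 : cong (Z.of_nat n) (cf_q (aseq n) 0) 1) by (exists 0%Z; rewrite h4; lia).
    simpl in Hm. refine (cong_nodiv _ _ _ _ _ m HN C1 C2 _ Hdiv'). left. lia.
  - rewrite (Nat.div_mod_eq k' 4) in *.
    set (j := (k' / 4)%nat) in *. assert (Hr := Nat.mod_upper_bound k' 4 ltac:(lia)).
    set (r := (k' mod 4)%nat) in *. clearbody j r.
    destruct (st_inv n Hn j) as [I1 I2].
    destruct (st_chain n Hn j I1 I2) as [[A1 A2] [[B1 B2] [[C1 C2] _]]].
    destruct r as [|[|[|[|r]]]]; [| | | | lia].
    + replace (S (4*j+0)) with (4*j+1)%nat in * by lia.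
      rewrite (a_r0 n Hn j) in Hm.
      refine (cong_nodiv _ _ _ _ _ m HN I1 I2 _ Hdiv'). lia.
    + replace (S (4*j+1)) with (S (4*j+1)) in * by lia.
      rewrite (a_r1 n Hn j) in Hm.
      refine (cong_nodiv _ _ _ _ _ m HN A1 A2 _ Hdiv'). right. lia.
    + replace (S (4*j+2)) with (S (S (4*j+1))) in * by lia.
      rewrite (a_r2 n Hn j) in Hm.
      refine (cong_nodiv _ _ _ _ _ m HN B1 B2 _ Hdiv'). lia.
    + replace (S (4*j+3)) with (S (S (S (4*j+1)))) in * by lia.
      rewrite (a_r3 n Hn j) in Hm.
      refine (cong_nodiv _ _ _ _ _ m HN C1 C2 _ Hdiv'). left. lia.
Qed.

Theorem mainTheorem7 : forall n : nat, (4 <= n)%nat ->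
  exists alpha : R, 0 < alpha /\ infinite_loop_mod n alpha.
Proof.
  intros n Hn. destruct (Nat.eq_dec n 4) as [->|Hne].
  - exists (3/2). split; [lra|]. exact four_ok.
  - apply five_ok. lia.
Qed.
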